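(* Let $a,b,c,d,e,f,k,l,p,q,r,s\ge0$ be integers with $a+b$, $c+d$, $e+f$, $k+l$, $p+q$, $r+s$ positive, and let $$E=\begin{bmatrix} J_{k,a}&-J_{k,b}&J_{k,c}&-J_{k,d}&0&0\\ -J_{l,a}&J_{l,b}&-J_{l,c}&J_{l,d}&0&0\\ J_{p,a}&-J_{p,b}&0&0&J_{p,e}&-J_{p,f}\\ -J_{q,a}&J_{q,b}&0&0&-J_{q,e}&J_{q,f}\\ 0&0&J_{r,c}&-J_{r,d}&-J_{r,e}&J_{r,f}\\ 0&0&-J_{s,c}&J_{s,d}&J_{s,e}&-J_{s,f} \end{bmatrix}$$ with $E\mathbf 1=0$ and $\mathbf 1^TE=0^T$. Then $E$ is realizable if and only if one of the following holds: (i) $a+b$, $c+d$, $e+f$, $k+l$, $p+q$ and $r+s$ are all even; (ii) either $a+b$, $c+d$, $e+f$ are all odd or $k+l$, $p+q$, $r+s$ are all odd, and $\frac{e+f}{k+l}=\frac{c+d}{p+q}=\frac{a+b}{r+s}$.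
   Context: $J_{p,q}$ is the $p\times q$ all-ones matrix. Two $(0,1)$ matrices $A,B$ are Gram mates if $AA^T=BB^T$, $A^TA=B^TB$ and $A\neq B$. A $(0,1,-1)$ matrix $E$ with $E\mathbf 1=0$, $\mathbf 1^TE=0^T$ is realizable if there is a $(0,1)$ matrix $A$ such that $A$ and $A+E$ are Gram mates. *)

(* Defs.v *)
From mathcomp Require Import all_boot all_order all_algebra.
Set Implicit Arguments. Unset Strict Implicit. Unset Printing Implicit Defensive.
Import Order.TTheory GRing.Theory Num.Theory.
Local Open Scope ring_scope.

Definition is01 (m n : nat) (A : 'M[int]_(m, n)) : Prop :=
  forall i j, A i j = 0 \/ A i j = 1.

Definition gram_mates (m n : nat) (A B : 'M[int]_(m, n)) : Prop :=
  [/\ is01 A, is01 B, A *m A^T = B *m B^T, A^T *m A = B^T *m B & A <> B].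

Definition realizable (m n : nat) (E : 'M[int]_(m, n)) : Prop :=
  exists A : 'M[int]_(m, n), gram_mates A (A + E).

Definition blk (x0 x1 x2 x3 x4 x5 i : nat) : nat :=
  if (i < x0)%N then 0%N
  else if (i < x0 + x1)%N then 1%N
  else if (i < x0 + x1 + x2)%N then 2%N
  else if (i < x0 + x1 + x2 + x3)%N then 3%N
  else if (i < x0 + x1 + x2 + x3 + x4)%N then 4%N
  else 5%N.

Definition sgn_tab (rb cb : nat) : int :=
  match rb, cb with
  | 0, 0 => 1 | 0, 1 => -1 | 0, 2 => 1 | 0, 3 => -1 | 0, _ => 0
  | 1, 0 => -1 | 1, 1 => 1 | 1, 2 => -1 | 1, 3 => 1 | 1, _ => 0
  | 2, 0 => 1 | 2, 1 => -1 | 2, 4 => 1 | 2, 5 => -1 | 2, _ => 0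
  | 3, 0 => -1 | 3, 1 => 1 | 3, 4 => -1 | 3, 5 => 1 | 3, _ => 0
  | 4, 2 => 1 | 4, 3 => -1 | 4, 4 => -1 | 4, 5 => 1 | 4, _ => 0
  | _, 2 => -1 | _, 3 => 1 | _, 4 => 1 | _, 5 => -1 | _, _ => 0
  end.

Definition Emx (a b c d e f k l p q r s : nat) :
  'M[int]_(k + l + p + q + r + s, a + b + c + d + e + f) :=
  \matrix_(i, j) sgn_tab (blk k l p q r s i) (blk a b c d e f j).

(* Main.v *)
Set Warnings "-notation-overridden,-ambiguous-paths".
Require Import Defs.
From mathcomp Require Import all_boot all_order all_algebra.
From mathcomp Require Import zify ring lra.
Import Order.TTheory GRing.Theory Num.Theory.
Local Open Scope ring_scope.

Definition sum6 (G : nat -> int) : int :=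
  G 0%N + G 1%N + G 2%N + G 3%N + G 4%N + G 5%N.

Lemma eq_sum6 (G H : nat -> int) :
  (forall c, (c < 6)%N -> G c = H c) -> sum6 G = sum6 H.
Proof. by move=> h; rewrite /sum6 !h. Qed.

Section Blk.
Variables y0 y1 y2 y3 y4 y5 : nat.
Local Notation Y := (y0 + y1 + y2 + y3 + y4 + y5)%N.
Local Notation bk := (blk y0 y1 y2 y3 y4 y5).

Definition ysz (c : nat) : nat :=
  match c with 0 => y0 | 1 => y1 | 2 => y2 | 3 => y3 | 4 => y4 | _ => y5 end.

Lemma blk_lt6 j : (bk j < 6)%N.
Proof. by rewrite /blk; repeat case: ifP => _. Qed.

Lemma sum_range_const lo hi b (G : nat -> int) :
  (forall j, (lo <= j < hi)%N -> bk j = b) ->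
  \sum_(lo <= j < hi) G (bk j) = (hi - lo)%N%:Z * G b.
Proof.
move=> h; rewrite (eq_big_nat _ _ (F2 := fun _ => G b)); last by move=> j /h ->.
by rewrite sumr_const_nat -mulr_natl natz.
Qed.

Ltac blkt := move=> ? /andP[? ?]; rewrite /blk; repeat case: ifP => ?; lia.

Lemma sum_blk_const (G : nat -> int) :
  \sum_(j < Y) G (bk j) = sum6 (fun c => (ysz c)%:Z * G c).
Proof.
rewrite -(big_mkord xpredT (fun j => G (bk j))).
rewrite (big_cat_nat _ (n := y0)) //; last by lia.
rewrite (big_cat_nat _ (m := y0) (n := (y0 + y1)%N)) //; try lia.
rewrite (big_cat_nat _ (m := (y0 + y1)%N) (n := (y0 + y1 + y2)%N)) //; try lia.
rewrite (big_cat_nat _ (m := (y0 + y1 + y2)%N) (n := (y0 + y1 + y2 + y3)%N)) //; try lia.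
rewrite (big_cat_nat _ (m := (y0 + y1 + y2 + y3)%N) (n := (y0 + y1 + y2 + y3 + y4)%N)) //; try lia.
rewrite (@sum_range_const _ _ 0%N); last by blkt.
rewrite (@sum_range_const _ _ 1%N); last by blkt.
rewrite (@sum_range_const _ _ 2%N); last by blkt.
rewrite (@sum_range_const _ _ 3%N); last by blkt.
rewrite (@sum_range_const _ _ 4%N); last by blkt.
rewrite (@sum_range_const _ _ 5%N); last by blkt.
rewrite /sum6 /=.
have -> : (y0 - 0)%N = y0 by lia.
have -> : (y0 + y1 - y0)%N = y1 by lia.
have -> : (y0 + y1 + y2 - (y0 + y1))%N = y2 by lia.
have -> : (y0 + y1 + y2 + y3 - (y0 + y1 + y2))%N = y3 by lia.
have -> : (y0 + y1 + y2 + y3 + y4 - (y0 + y1 + y2 + y3))%N = y4 by lia.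
have -> : (y0 + y1 + y2 + y3 + y4 + y5 - (y0 + y1 + y2 + y3 + y4))%N = y5 by lia.
by rewrite !addrA.
Qed.

Lemma sum_by_blk (F : 'I_Y -> int) :
  \sum_j F j = sum6 (fun c => \sum_(j : 'I_Y | bk j == c) F j).
Proof.
rewrite /sum6; do 6 rewrite (big_mkcond (fun j : 'I_Y => bk j == _)).
rewrite -!big_split /=.
apply: eq_bigr => j _; have := blk_lt6 j.
case: (bk j) => [|[|[|[|[|[|n]]]]]] //= _; rewrite ?addr0 ?add0r //.
Qed.

Lemma count_blk c : (c < 6)%N -> \sum_(j < Y | bk j == c) (1 : int) = (ysz c)%:Z.
Proof.
move=> hc; rewrite big_mkcond /=.
rewrite (sum_blk_const (fun b => if b == c then 1 else 0)) /sum6.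
by case: c hc => [|[|[|[|[|[|n]]]]]] //= _; rewrite ?mulr0 ?mulr1 ?addr0 ?add0r.
Qed.

Lemma count_grp g (cst : int) : (g < 3)%N ->
  \sum_(j < Y | (bk j)./2 == g) cst = (ysz (2 * g) + ysz (2 * g).+1)%N%:Z * cst.
Proof.
move=> hg; rewrite big_mkcond /=.
rewrite (sum_blk_const (fun b => if b./2 == g then cst else 0)) /sum6.
case: g hg => [|[|[|n]]] //= _; rewrite ?mulr0 ?addr0 ?add0r PoszD mulrDl ?addrA //.

Qed.


Definition glo (g : nat) : nat :=
  match g with 0 => 0%N | 1 => (y0 + y1)%N | _ => (y0 + y1 + y2 + y3)%N end.
Definition gsz (g : nat) : nat := (ysz (2 * g) + ysz (2 * g).+1)%N.

Lemma grp_range g (j : nat) : (g < 3)%N -> (j < Y)%N ->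
  ((bk j)./2 == g) = (glo g <= j < glo g + gsz g)%N.
Proof.
case: g => [|[|[|n]]] //= _ ?; rewrite /gsz /= /blk; repeat case: ifP => ?; lia.
Qed.

Lemma gsz_le g : (g < 3)%N -> (glo g + gsz g <= Y)%N.
Proof. by case: g => [|[|[|n]]] //= _; rewrite /gsz /=; lia. Qed.

Lemma sum_ord_range (F : nat -> int) lo hi : (hi <= Y)%N ->
  \sum_(j < Y | (lo <= j < hi)%N) F j = \sum_(lo <= j < hi) F j.
Proof.
move=> hY.
case: (leqP lo hi) => hlh; last first.
  rewrite big_geq; last by lia.
  by rewrite big1 // => j; lia.
rewrite -(big_mkord (fun j => lo <= j < hi)%N F).
rewrite (big_cat_nat _ (n := lo)) //; last by lia.
rewrite (big_cat_nat _ (m := lo) (n := hi)) //.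
rewrite big_nat_cond big1; last by move=> i; lia.
rewrite /= add0r [X in _ + X = _]big_nat_cond [X in _ + X = _]big1; last by move=> i; lia.
rewrite addr0 big_nat_cond [RHS]big_nat_cond.
by apply: eq_bigl => i; rewrite andbb andbT.
Qed.

End Blk.

Lemma sum_lt_min (G H : nat) :
  \sum_(0 <= j < G) (if (j < H)%N then 1 else 0 : int) = (minn H G)%N%:Z.
Proof.
elim: G => [|G IH]; first by rewrite big_geq //; lia.
rewrite big_nat_recr //= IH.
case: ifP => h; lia.
Qed.

Lemma sum_shift_mod (G H s : nat) : (0 < G)%N -> (H <= G)%N ->
  \sum_(0 <= j < G) (if ((s + j) %% G < H)%N then 1 else 0 : int) = H%:Z.
Proof.
move=> hG hH.
rewrite big_mkord.
pose h := fun j : 'I_G => Ordinal (ltn_pmod (s + j) hG).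
have hinj : injective h.
  move=> j1 j2 [] /eqP; rewrite eqn_modDl !modn_small // => /eqP e.
  by apply: val_inj.
rewrite (eq_bigr (fun j => (fun k : 'I_G => if (k < H)%N then 1 else 0 : int) (h j))) //.
rewrite -(reindex_inj hinj (P := xpredT) (F := fun k : 'I_G => if (k < H)%N then 1 else 0 : int)) /=.
rewrite -(big_mkord xpredT (fun j => if (j < H)%N then 1 else 0)).
rewrite sum_lt_min; congr Posz; lia.
Qed.

Lemma sum_period (G H s n : nat) : (0 < G)%N -> (H <= G)%N ->
  \sum_(0 <= j < n * G) (if ((s + j) %% G < H)%N then 1 else 0 : int) = (n * H)%N%:Z.
Proof.
move=> hG hH; elim: n => [|n IH]; first by rewrite mul0n big_geq.
rewrite (big_cat_nat _ (n := (n * G)%N)) //=; last by rewrite mulSn; lia.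
rewrite IH -{1}(add0n (n * G)%N) big_addn.
have -> : (n.+1 * G - n * G)%N = G by rewrite mulSn; lia.
rewrite (eq_bigr (fun j => if ((s + j) %% G < H)%N then 1 else 0)); last first.
  by move=> j _; rewrite addnA [(_ + n * G)%N]addnC modnMDl.
by rewrite sum_shift_mod // mulSn PoszD addrC.
Qed.

Section Alg.
Variables y0 y1 y2 y3 y4 y5 : nat.
Local Notation ys := (ysz y0 y1 y2 y3 y4 y5).

Definition nfix (r : nat) (f : nat -> int) (c : nat) : int :=
  if sgn_tab r c == 1 then 0 else if sgn_tab r c == -1 then (ys c)%:Z else f c.
Definition rowexprN (r r' : nat) (n n' : nat -> int) : int :=
  sum6 (fun c => sgn_tab r' c * n c + sgn_tab r c * n' c
                 + sgn_tab r c * sgn_tab r' c * (ys c)%:Z).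
Definition rhoN (r : nat) (f : nat -> int) : int :=
  sum6 (fun c => if sgn_tab r c == 0 then
                   (if odd r == odd c then f c else (ys c)%:Z - f c) else 0).
Definition zsz (r : nat) : int :=
  if r./2 == 0%N then (y4 + y5)%N%:Z else if r./2 == 1%N then (y2 + y3)%N%:Z
  else (y0 + y1)%N%:Z.
Definition sgr (g : nat) : int := if g == 1%N then -1 else 1.
Definition phi (r : nat) (rho : int) : int := sgr r./2 * (2 * rho - zsz r).

Definition lineY := (y0%:Z - y1%:Z + y2%:Z - y3%:Z = 0) /\ (y0%:Z - y1%:Z + y4%:Z - y5%:Z = 0).

Lemma alg_fwd r r' f f' : (r < 6)%N -> (r' < 6)%N -> lineY ->
  rowexprN r r' (nfix r f) (nfix r' f') = 0 -> r./2 != r'./2 ->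
  phi r (rhoN r f) = phi r' (rhoN r' f').
Proof.
move=> hr hr' [l1 l2].
case: r hr => [|[|[|[|[|[|r]]]]]] // _; case: r' hr' => [|[|[|[|[|[|r']]]]]] // _;
  rewrite /rowexprN /nfix /rhoN /phi /zsz /sgr /sum6 /=; lia.
Qed.

Lemma alg_bwd r r' f f' : (r < 6)%N -> (r' < 6)%N -> lineY ->
  phi r (rhoN r f) = phi r' (rhoN r' f') ->
  rowexprN r r' (nfix r f) (nfix r' f') = 0.
Proof.
move=> hr hr' [l1 l2].
case: r hr => [|[|[|[|[|[|r]]]]]] // _; case: r' hr' => [|[|[|[|[|[|r']]]]]] // _;
  rewrite /rowexprN /nfix /rhoN /phi /zsz /sgr /sum6 /=; lia.
Qed.

End Alg.

Lemma sgn_sym r c : (r < 6)%N -> (c < 6)%N -> sgn_tab r c = sgn_tab c r.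
Proof. by case: r => [|[|[|[|[|[|r]]]]]] //; case: c => [|[|[|[|[|[|c]]]]]]. Qed.

Lemma sgn_vals r c : sgn_tab r c = 0 \/ sgn_tab r c = 1 \/ sgn_tab r c = -1.
Proof.
by case: r => [|[|[|[|[|[|r]]]]]]; case: c => [|[|[|[|[|[|c]]]]]]; try by [left|right;left|right;right].
Qed.

Lemma zero_pat r c : (r < 6)%N -> (c < 6)%N ->
  (sgn_tab r c == 0) = (c./2 == 2 - r./2)%N.
Proof.
by case: r => [|[|[|[|[|[|r]]]]]] //; case: c => [|[|[|[|[|[|c]]]]]].
Qed.

Section Mx.
Variables x0 x1 x2 x3 x4 x5 y0 y1 y2 y3 y4 y5 : nat.
Local Notation X := (x0 + x1 + x2 + x3 + x4 + x5)%N.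
Local Notation Y := (y0 + y1 + y2 + y3 + y4 + y5)%N.
Local Notation rk := (blk x0 x1 x2 x3 x4 x5).
Local Notation ck := (blk y0 y1 y2 y3 y4 y5).
Local Notation ys := (ysz y0 y1 y2 y3 y4 y5).
Local Notation E := (Emx y0 y1 y2 y3 y4 y5 x0 x1 x2 x3 x4 x5).

Definition nc (A : 'M[int]_(X, Y)) (i : 'I_X) (c : nat) : int :=
  \sum_(j : 'I_Y | ck j == c) A i j.
Definition Wof (A : 'M[int]_(X, Y)) (i : 'I_X) (j : 'I_Y) : int :=
  if odd (rk i) == odd (ck j) then A i j else 1 - A i j.
Definition rho (A : 'M[int]_(X, Y)) (i : 'I_X) : int :=
  \sum_(j : 'I_Y | sgn_tab (rk i) (ck j) == 0) Wof A i j.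
Definition fixedA (A : 'M[int]_(X, Y)) :=
  forall (i : 'I_X) (j : 'I_Y), sgn_tab (rk i) (ck j) != 0 ->
    A i j = (if sgn_tab (rk i) (ck j) == -1 then 1 else 0).

Lemma gram_entry A i i' :
  ((A + E) *m (A + E)^T) i i' - (A *m A^T) i i' =
  rowexprN y0 y1 y2 y3 y4 y5 (rk i) (rk i') (nc A i) (nc A i').
Proof.
rewrite !mxE -sumrB sum_by_blk /rowexprN; apply: eq_sum6 => c hc.
rewrite (eq_bigr (fun j => sgn_tab (rk i') c * A i j + sgn_tab (rk i) c * A i' j
                   + sgn_tab (rk i) c * sgn_tab (rk i') c * 1)); last first.
  by move=> j /eqP hj; rewrite !mxE hj; ring.
by rewrite !big_split /= -!mulr_sumr count_blk.
Qed.

Lemma nc_fix A i c : fixedA A -> (c < 6)%N ->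
  nc A i c = nfix y0 y1 y2 y3 y4 y5 (rk i) (nc A i) c.
Proof.
move=> hA hc; rewrite /nfix; case: ifP => h1.
  rewrite /nc big1 // => j /eqP hj; rewrite hA; rewrite hj (eqP h1) //.
case: ifP => h2 //.
rewrite /nc -(count_blk y0 y1 y2 y3 y4 y5 c hc); apply: eq_bigr => j /eqP hj.
by rewrite hA hj ?h2 // (eqP h2).
Qed.

Lemma rho_expr A i : rho A i = rhoN y0 y1 y2 y3 y4 y5 (rk i) (nc A i).
Proof.
rewrite /rho big_mkcond sum_by_blk /rhoN; apply: eq_sum6 => c hc.
rewrite (eq_bigr (fun j => if sgn_tab (rk i) c == 0 then
   (if odd (rk i) == odd c then A i j else 1 - A i j) else 0)); last first.
  by move=> j /eqP hj; rewrite /Wof hj.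
case: ifP => _; last by rewrite big1.
case: ifP => _ //.
by rewrite sumrB count_blk.
Qed.

Lemma row_fwd A : fixedA A -> lineY y0 y1 y2 y3 y4 y5 ->
  (A + E) *m (A + E)^T = A *m A^T ->
  forall (i i' : 'I_X), (rk i)./2 != (rk i')./2 ->
  phi y0 y1 y2 y3 y4 y5 (rk i) (rho A i) = phi y0 y1 y2 y3 y4 y5 (rk i') (rho A i').
Proof.
move=> hA hl hG i i' hne.
have h := gram_entry A i i'; rewrite hG subrr in h.
rewrite !rho_expr; apply: alg_fwd => //; try exact: blk_lt6.
rewrite h /rowexprN; apply: eq_sum6 => c hc.
by rewrite -!nc_fix.
Qed.

Lemma row_bwd A c0 : fixedA A -> lineY y0 y1 y2 y3 y4 y5 ->
  (forall i : 'I_X, phi y0 y1 y2 y3 y4 y5 (rk i) (rho A i) = c0) ->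
  (A + E) *m (A + E)^T = A *m A^T.
Proof.
move=> hA hl hphi; apply/matrixP => i i'; apply/eqP; rewrite -subr_eq0; apply/eqP.
rewrite gram_entry.
have -> : rowexprN y0 y1 y2 y3 y4 y5 (rk i) (rk i') (nc A i) (nc A i') =
  rowexprN y0 y1 y2 y3 y4 y5 (rk i) (rk i')
     (nfix y0 y1 y2 y3 y4 y5 (rk i) (nc A i)) (nfix y0 y1 y2 y3 y4 y5 (rk i') (nc A i')).
  by rewrite /rowexprN; apply: eq_sum6 => c hc; rewrite -!nc_fix.
apply: alg_bwd => //; try exact: blk_lt6.
by rewrite -!rho_expr !hphi.
Qed.

End Mx.

Section Tr.
Variables x0 x1 x2 x3 x4 x5 y0 y1 y2 y3 y4 y5 : nat.
Local Notation X := (x0 + x1 + x2 + x3 + x4 + x5)%N.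
Local Notation Y := (y0 + y1 + y2 + y3 + y4 + y5)%N.
Local Notation rk := (blk x0 x1 x2 x3 x4 x5).
Local Notation ck := (blk y0 y1 y2 y3 y4 y5).
Local Notation E := (Emx y0 y1 y2 y3 y4 y5 x0 x1 x2 x3 x4 x5).
Local Notation E' := (Emx x0 x1 x2 x3 x4 x5 y0 y1 y2 y3 y4 y5).

Lemma Emx_tr : E^T = E'.
Proof.
apply/matrixP => j i; rewrite !mxE sgn_sym //; exact: blk_lt6.
Qed.

Lemma fixedA_tr (A : 'M[int]_(X, Y)) :
  fixedA x0 x1 x2 x3 x4 x5 y0 y1 y2 y3 y4 y5 A ->
  fixedA y0 y1 y2 y3 y4 y5 x0 x1 x2 x3 x4 x5 A^T.
Proof.
move=> h j i; rewrite mxE sgn_sym; [exact: h | exact: blk_lt6 | exact: blk_lt6].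
Qed.

Lemma rho_tr (A : 'M[int]_(X, Y)) (j : 'I_Y) :
  rho y0 y1 y2 y3 y4 y5 x0 x1 x2 x3 x4 x5 A^T j =
  \sum_(i : 'I_X | sgn_tab (rk i) (ck j) == 0) Wof x0 x1 x2 x3 x4 x5 y0 y1 y2 y3 y4 y5 A i j.
Proof.
rewrite /rho; apply: eq_big => i.
  by rewrite sgn_sym //; exact: blk_lt6.
by move=> _; rewrite /Wof mxE eq_sym.
Qed.

Lemma gram_tr (A : 'M[int]_(X, Y)) :
  ((A + E)^T *m (A + E) = A^T *m A) ->
  (A^T + E') *m (A^T + E')^T = A^T *m A^T^T.
Proof. move=> h; rewrite -Emx_tr -linearD /= !trmxK. exact: h. Qed.

Lemma half_lt3 r : (r < 6)%N -> (r./2 < 3)%N.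
Proof. by move: r; do 6 case=> //. Qed.

Lemma dcount (A : 'M[int]_(X, Y)) g : (g < 3)%N ->
  \sum_(i : 'I_X | (rk i)./2 == g) rho x0 x1 x2 x3 x4 x5 y0 y1 y2 y3 y4 y5 A i =
  \sum_(j : 'I_Y | (ck j)./2 == (2 - g)%N) rho y0 y1 y2 y3 y4 y5 x0 x1 x2 x3 x4 x5 A^T j.
Proof.
move=> hg; rewrite /rho.
transitivity (\sum_(i : 'I_X | (rk i)./2 == g) \sum_(j : 'I_Y | (ck j)./2 == (2 - g)%N)
                Wof x0 x1 x2 x3 x4 x5 y0 y1 y2 y3 y4 y5 A i j).
  apply: eq_bigr => i /eqP hi; apply: eq_bigl => j.
  by rewrite zero_pat ?blk_lt6 // hi.
rewrite exchange_big; apply: eq_bigr => j /eqP hj.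
rewrite -/(rho y0 y1 y2 y3 y4 y5 x0 x1 x2 x3 x4 x5 A^T j) rho_tr.
apply: eq_bigl => i; rewrite zero_pat ?blk_lt6 // hj.
have := half_lt3 _ (blk_lt6 x0 x1 x2 x3 x4 x5 i); lia.
Qed.

End Tr.

Lemma zsz_gsz y0 y1 y2 y3 y4 y5 r : (r < 6)%N ->
  zsz y0 y1 y2 y3 y4 y5 r = (gsz y0 y1 y2 y3 y4 y5 (2 - r./2))%:Z.
Proof. by move: r; do 6 case=> //. Qed.

Lemma phi_2rho y0 y1 y2 y3 y4 y5 r rh a : (r < 6)%N ->
  phi y0 y1 y2 y3 y4 y5 r rh = a ->
  2 * rh = sgr r./2 * a + zsz y0 y1 y2 y3 y4 y5 r.
Proof.
move=> hr <-; rewrite /phi /sgr; case: ifP => _; ring.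
Qed.

Lemma sgr_sym g : (g < 3)%N -> sgr (2 - g) = sgr g.
Proof. by move: g; do 3 case=> //. Qed.

Lemma rep_ex y0 y1 y2 y3 y4 y5 g : (g < 3)%N -> (0 < gsz y0 y1 y2 y3 y4 y5 g)%N ->
  exists j : 'I_(y0 + y1 + y2 + y3 + y4 + y5), (blk y0 y1 y2 y3 y4 y5 j)./2 == g.
Proof.
move=> hg hpos.
have hlt : (glo y0 y1 y2 y3 g < y0 + y1 + y2 + y3 + y4 + y5)%N.
  by have := gsz_le y0 y1 y2 y3 y4 y5 g hg; lia.
exists (Ordinal hlt); rewrite grp_range //=; lia.
Qed.

Section OnlyIf.
Variables x0 x1 x2 x3 x4 x5 y0 y1 y2 y3 y4 y5 : nat.
Local Notation X := (x0 + x1 + x2 + x3 + x4 + x5)%N.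
Local Notation Y := (y0 + y1 + y2 + y3 + y4 + y5)%N.
Local Notation rk := (blk x0 x1 x2 x3 x4 x5).
Local Notation ck := (blk y0 y1 y2 y3 y4 y5).
Local Notation E := (Emx y0 y1 y2 y3 y4 y5 x0 x1 x2 x3 x4 x5).
Local Notation E' := (Emx x0 x1 x2 x3 x4 x5 y0 y1 y2 y3 y4 y5).

Lemma fixed_of_01 (A : 'M[int]_(X, Y)) :
  is01 A -> is01 (A + E) -> fixedA x0 x1 x2 x3 x4 x5 y0 y1 y2 y3 y4 y5 A.
Proof.
move=> h1 h2 i j hne; have := h1 i j; have := h2 i j; rewrite !mxE.
move: hne; case: (sgn_vals (rk i) (ck j)) => [->|[->|->]] //= _; lia.
Qed.

Lemma phi_const (A : 'M[int]_(X, Y)) :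
  fixedA x0 x1 x2 x3 x4 x5 y0 y1 y2 y3 y4 y5 A -> lineY y0 y1 y2 y3 y4 y5 ->
  (forall g, (g < 3)%N -> (0 < gsz x0 x1 x2 x3 x4 x5 g)%N) ->
  (A + E) *m (A + E)^T = A *m A^T ->
  exists a, forall i : 'I_X, phi y0 y1 y2 y3 y4 y5 (rk i)
                 (rho x0 x1 x2 x3 x4 x5 y0 y1 y2 y3 y4 y5 A i) = a.
Proof.
move=> hA hl hne hG.
have [i0 h0] := @rep_ex x0 x1 x2 x3 x4 x5 0%N isT (hne 0%N isT).
have [i1 h1] := @rep_ex x0 x1 x2 x3 x4 x5 1%N isT (hne 1%N isT).
have hf := @row_fwd x0 x1 x2 x3 x4 x5 y0 y1 y2 y3 y4 y5 A hA hl hG.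
exists (phi y0 y1 y2 y3 y4 y5 (rk i1) (rho x0 x1 x2 x3 x4 x5 y0 y1 y2 y3 y4 y5 A i1)).
move=> i; case: (eqVneq (rk i)./2 1%N) => hi.
  rewrite (hf i i0); last by rewrite hi (eqP h0).
  by rewrite (hf i0 i1) // (eqP h0) (eqP h1).
by apply: hf; rewrite (eqP h1).
Qed.

End OnlyIf.

Arguments fixed_of_01 {x0 x1 x2 x3 x4 x5 y0 y1 y2 y3 y4 y5 A}.
Arguments fixedA_tr {x0 x1 x2 x3 x4 x5 y0 y1 y2 y3 y4 y5 A}.
Arguments gram_tr {x0 x1 x2 x3 x4 x5 y0 y1 y2 y3 y4 y5 A}.
Arguments dcount {x0 x1 x2 x3 x4 x5 y0 y1 y2 y3 y4 y5}.
Arguments row_fwd {x0 x1 x2 x3 x4 x5 y0 y1 y2 y3 y4 y5}.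
Arguments row_bwd {x0 x1 x2 x3 x4 x5 y0 y1 y2 y3 y4 y5}.

Arguments phi_2rho {y0 y1 y2 y3 y4 y5 r rh a}.

Section OnlyIf2.
Variables x0 x1 x2 x3 x4 x5 y0 y1 y2 y3 y4 y5 : nat.
Local Notation X := (x0 + x1 + x2 + x3 + x4 + x5)%N.
Local Notation Y := (y0 + y1 + y2 + y3 + y4 + y5)%N.
Local Notation rk := (blk x0 x1 x2 x3 x4 x5).
Local Notation ck := (blk y0 y1 y2 y3 y4 y5).
Local Notation E := (Emx y0 y1 y2 y3 y4 y5 x0 x1 x2 x3 x4 x5).
Local Notation E' := (Emx x0 x1 x2 x3 x4 x5 y0 y1 y2 y3 y4 y5).
Local Notation gx := (gsz x0 x1 x2 x3 x4 x5).
Local Notation gy := (gsz y0 y1 y2 y3 y4 y5).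

Lemma onlyif_gen :
  lineY x0 x1 x2 x3 x4 x5 -> lineY y0 y1 y2 y3 y4 y5 ->
  (forall g, (g < 3)%N -> (0 < gx g)%N) ->
  (forall g, (g < 3)%N -> (0 < gy g)%N) ->
  realizable E ->
  exists (a b u v : int), a = 2 * u - (y4 + y5)%N%:Z /\ b = 2 * v - (x4 + x5)%N%:Z /\
    (forall g, (g < 3)%N -> (gx g)%:Z * a = (gy (2 - g))%:Z * b).
Proof.
move=> hx hy hnx hny [A [h01 h01' hrow hcol hneq]].
have hA := fixed_of_01 h01 h01'.
have [a ha] := @phi_const x0 x1 x2 x3 x4 x5 y0 y1 y2 y3 y4 y5 A hA hy hnx (esym hrow).
have hAt := fixedA_tr hA.
have hG' := gram_tr (esym hcol).
have [b hb] := @phi_const y0 y1 y2 y3 y4 y5 x0 x1 x2 x3 x4 x5 A^T hAt hx hny hG'.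
have [i0 h0] := @rep_ex x0 x1 x2 x3 x4 x5 0%N isT (hnx 0%N isT).
have [j0 k0] := @rep_ex y0 y1 y2 y3 y4 y5 0%N isT (hny 0%N isT).
exists a, b, (rho x0 x1 x2 x3 x4 x5 y0 y1 y2 y3 y4 y5 A i0),
  (rho y0 y1 y2 y3 y4 y5 x0 x1 x2 x3 x4 x5 A^T j0).
split.
  have := phi_2rho (blk_lt6 x0 x1 x2 x3 x4 x5 i0) (ha i0).
  rewrite zsz_gsz ?blk_lt6 // (eqP h0) /sgr /gsz /=; lia.
split.
  have := phi_2rho (blk_lt6 y0 y1 y2 y3 y4 y5 j0) (hb j0).
  rewrite zsz_gsz ?blk_lt6 // (eqP k0) /sgr /gsz /=; lia.
move=> g hg.
have hd := congr1 (fun z => 2 * z) (dcount A g hg); rewrite /= !mulr_sumr in hd.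
rewrite (eq_bigr (fun _ => sgr g * a + (gy (2 - g))%:Z)) in hd; last first.
  move=> i /eqP hi; rewrite (phi_2rho (blk_lt6 _ _ _ _ _ _ _) (ha i)).
  by rewrite zsz_gsz ?blk_lt6 // hi.
rewrite [in RHS](eq_bigr (fun _ => sgr g * b + (gx g)%:Z)) in hd; last first.
  move=> j /eqP hj; rewrite (phi_2rho (blk_lt6 _ _ _ _ _ _ _) (hb j)).
  rewrite zsz_gsz ?blk_lt6 // hj sgr_sym //.
  by have -> : (2 - (2 - g))%N = g by lia.
rewrite !count_grp // in hd; last by lia.
move: hd; rewrite -!/(gsz _ _ _ _ _ _ _).
move: g hg => [|[|[|g]]] // _; rewrite /sgr /= => h; nia.
Qed.

End OnlyIf2.

Lemma sgn_nz r c : (r < 6)%N -> (c < 6)%N -> r./2 == 0%N -> c./2 == 0%N -> sgn_tab r c != 0.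
Proof. by move: r c; do 6 case=> //; do 6 case=> //. Qed.

Lemma grp_count y0 y1 y2 y3 y4 y5 g (G H s : nat) : (g < 3)%N -> (0 < G)%N -> (H <= G)%N ->
  (G %| gsz y0 y1 y2 y3 y4 y5 g)%N ->
  \sum_(j : 'I_(y0 + y1 + y2 + y3 + y4 + y5) | (blk y0 y1 y2 y3 y4 y5 j)./2 == g)
     (if ((s + (j - glo y0 y1 y2 y3 g)) %% G < H)%N then 1 else 0 : int)
  = (gsz y0 y1 y2 y3 y4 y5 g %/ G * H)%N%:Z.
Proof.
move=> hg hG hH hd.
rewrite (eq_bigl (fun j : 'I_(y0 + y1 + y2 + y3 + y4 + y5) =>
   (glo y0 y1 y2 y3 g <= j < glo y0 y1 y2 y3 g + gsz y0 y1 y2 y3 y4 y5 g)%N)); last first.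
  by move=> j; rewrite grp_range.
rewrite (@sum_ord_range y0 y1 y2 y3 y4 y5 (fun j => if ((s + (j - glo y0 y1 y2 y3 g)) %% G < H)%N then 1 else 0 : int));
  last exact: gsz_le.
rewrite -{1}(add0n (glo y0 y1 y2 y3 g)) big_addn.
rewrite (eq_bigr (fun j => if ((s + j) %% G < H)%N then 1 else 0 : int)); last first.
  by move=> j _; rewrite addnK.
have -> : (glo y0 y1 y2 y3 g + gsz y0 y1 y2 y3 y4 y5 g - glo y0 y1 y2 y3 g)%N
   = (gsz y0 y1 y2 y3 y4 y5 g %/ G * G)%N by rewrite divnK //; lia.
by rewrite sum_period.
Qed.

Section IfDir.
Variables x0 x1 x2 x3 x4 x5 y0 y1 y2 y3 y4 y5 : nat.
Local Notation X := (x0 + x1 + x2 + x3 + x4 + x5)%N.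
Local Notation Y := (y0 + y1 + y2 + y3 + y4 + y5)%N.
Local Notation rk := (blk x0 x1 x2 x3 x4 x5).
Local Notation ck := (blk y0 y1 y2 y3 y4 y5).
Local Notation E := (Emx y0 y1 y2 y3 y4 y5 x0 x1 x2 x3 x4 x5).
Local Notation E' := (Emx x0 x1 x2 x3 x4 x5 y0 y1 y2 y3 y4 y5).
Local Notation gx := (gsz x0 x1 x2 x3 x4 x5).
Local Notation gy := (gsz y0 y1 y2 y3 y4 y5).
Variables (gg hh : nat -> nat).

Definition Wc (i : 'I_X) (j : 'I_Y) : int :=
  if (((i - glo x0 x1 x2 x3 (rk i)./2) + (j - glo y0 y1 y2 y3 (ck j)./2))
        %% gg (rk i)./2 < hh (rk i)./2)%N then 1 else 0.

Definition Acon : 'M[int]_(X, Y) :=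
  \matrix_(i, j) (if sgn_tab (rk i) (ck j) == 0 then
                    (if odd (rk i) == odd (ck j) then Wc i j else 1 - Wc i j)
                  else if sgn_tab (rk i) (ck j) == -1 then 1 else 0).

Lemma Acon_fixed : fixedA x0 x1 x2 x3 x4 x5 y0 y1 y2 y3 y4 y5 Acon.
Proof. by move=> i j h; rewrite mxE (negbTE h). Qed.

Lemma Wof_Acon (i : 'I_X) (j : 'I_Y) : sgn_tab (rk i) (ck j) == 0 ->
  Wof x0 x1 x2 x3 x4 x5 y0 y1 y2 y3 y4 y5 Acon i j = Wc i j.
Proof. by move=> h; rewrite /Wof mxE h; case: (odd _ == odd _) => //; ring. Qed.

Hypothesis hG : forall g, (g < 3)%N -> (0 < gg g)%N.
Hypothesis hH : forall g, (g < 3)%N -> (hh g <= gg g)%N.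
Hypothesis hdx : forall g, (g < 3)%N -> (gg g %| gx g)%N.
Hypothesis hdy : forall g, (g < 3)%N -> (gg g %| gy (2 - g))%N.

Lemma rho_Acon (i : 'I_X) : rho x0 x1 x2 x3 x4 x5 y0 y1 y2 y3 y4 y5 Acon i =
  (gy (2 - (rk i)./2) %/ gg (rk i)./2 * hh (rk i)./2)%N%:Z.
Proof.
have hr := half_lt3 _ (blk_lt6 x0 x1 x2 x3 x4 x5 i).
rewrite /rho (eq_bigr (Wc i)); last by move=> j; exact: Wof_Acon.
rewrite (eq_bigl (fun j : 'I_Y => (ck j)./2 == (2 - (rk i)./2)%N)); last first.
  by move=> j; rewrite zero_pat ?blk_lt6.
rewrite -(@grp_count y0 y1 y2 y3 y4 y5 _ _ _ (i - glo x0 x1 x2 x3 (rk i)./2)%N); try by [|lia|auto].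
by apply: eq_bigr => j /eqP hj; rewrite /Wc hj.
Qed.

Lemma rhoT_Acon (j : 'I_Y) : rho y0 y1 y2 y3 y4 y5 x0 x1 x2 x3 x4 x5 Acon^T j =
  (gx (2 - (ck j)./2) %/ gg (2 - (ck j)./2) * hh (2 - (ck j)./2))%N%:Z.
Proof.
have hr := half_lt3 _ (blk_lt6 y0 y1 y2 y3 y4 y5 j).
have h2 : (2 - (ck j)./2 < 3)%N by lia.
rewrite rho_tr (eq_bigr (Wc ^~ j)); last by move=> i; exact: Wof_Acon.
rewrite (eq_bigl (fun i : 'I_X => (rk i)./2 == (2 - (ck j)./2)%N)); last first.
  move=> i; rewrite zero_pat ?blk_lt6 //.
  have := half_lt3 _ (blk_lt6 x0 x1 x2 x3 x4 x5 i); lia.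
rewrite -(@grp_count x0 x1 x2 x3 x4 x5 _ _ _ (j - glo y0 y1 y2 y3 (ck j)./2)%N); try by [|lia|auto].
by apply: eq_bigr => i /eqP hi; rewrite /Wc hi addnC.
Qed.

End IfDir.

Section IfDir2.
Variables x0 x1 x2 x3 x4 x5 y0 y1 y2 y3 y4 y5 : nat.
Local Notation X := (x0 + x1 + x2 + x3 + x4 + x5)%N.
Local Notation Y := (y0 + y1 + y2 + y3 + y4 + y5)%N.
Local Notation rk := (blk x0 x1 x2 x3 x4 x5).
Local Notation ck := (blk y0 y1 y2 y3 y4 y5).
Local Notation E := (Emx y0 y1 y2 y3 y4 y5 x0 x1 x2 x3 x4 x5).
Local Notation E' := (Emx x0 x1 x2 x3 x4 x5 y0 y1 y2 y3 y4 y5).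
Local Notation gx := (gsz x0 x1 x2 x3 x4 x5).
Local Notation gy := (gsz y0 y1 y2 y3 y4 y5).

Lemma if_gen (gg hh : nat -> nat) (a b : int) :
  lineY x0 x1 x2 x3 x4 x5 -> lineY y0 y1 y2 y3 y4 y5 ->
  (0 < gx 0)%N -> (0 < gy 0)%N ->
  (forall g, (g < 3)%N -> (0 < gg g)%N) ->
  (forall g, (g < 3)%N -> (hh g <= gg g)%N) ->
  (forall g, (g < 3)%N -> (gg g %| gx g)%N) ->
  (forall g, (g < 3)%N -> (gg g %| gy (2 - g))%N) ->
  (forall g, (g < 3)%N -> sgr g * (2 * (gy (2 - g) %/ gg g * hh g)%N%:Z - (gy (2 - g))%:Z) = a) ->
  (forall g, (g < 3)%N -> sgr g * (2 * (gx g %/ gg g * hh g)%N%:Z - (gx g)%:Z) = b) ->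
  realizable E.
Proof.
move=> hx hy hx0 hy0 hG hH hdx hdy ha hb.
pose A := Acon x0 x1 x2 x3 x4 x5 y0 y1 y2 y3 y4 y5 gg hh.
have hA : fixedA x0 x1 x2 x3 x4 x5 y0 y1 y2 y3 y4 y5 A by exact: Acon_fixed.
exists A; split.
- by move=> i j; rewrite /A mxE /Wc; repeat case: ifP => _; lia.
- move=> i j; rewrite /A !mxE /Wc.
  by case: (sgn_vals (rk i) (ck j)) => [->|[->|->]] /=; repeat case: ifP => _; lia.
- symmetry; apply: (@row_bwd x0 x1 x2 x3 x4 x5 y0 y1 y2 y3 y4 y5 A a hA hy) => i.
  have hr := half_lt3 _ (blk_lt6 x0 x1 x2 x3 x4 x5 i).
  rewrite /A rho_Acon; try by auto.
  by rewrite /phi zsz_gsz ?blk_lt6 //; apply: ha.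
- have h := @row_bwd y0 y1 y2 y3 y4 y5 x0 x1 x2 x3 x4 x5 A^T b (fixedA_tr hA) hx.
  rewrite -Emx_tr -linearD /= !trmxK in h; symmetry; apply: h => j.
  have hr := half_lt3 _ (blk_lt6 y0 y1 y2 y3 y4 y5 j).
  rewrite /A rhoT_Acon; try by auto.
  rewrite /phi zsz_gsz ?blk_lt6 // -sgr_sym //.
  by apply: hb; lia.
- have [i0 h0] := @rep_ex x0 x1 x2 x3 x4 x5 0%N isT hx0.
  have [j0 k0] := @rep_ex y0 y1 y2 y3 y4 y5 0%N isT hy0.
  move/(congr1 (fun M : 'M[int]_(X, Y) => M i0 j0)); rewrite [in X in _ = X]mxE => h.
  have hE : E i0 j0 = 0.
    by apply: (addrI (A i0 j0)); rewrite addr0 -h.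
  move: hE; rewrite mxE; apply/eqP; apply: sgn_nz => //; exact: blk_lt6.
Qed.

End IfDir2.

Section Lines.
Variables x0 x1 x2 x3 x4 x5 y0 y1 y2 y3 y4 y5 : nat.
Local Notation X := (x0 + x1 + x2 + x3 + x4 + x5)%N.
Local Notation Y := (y0 + y1 + y2 + y3 + y4 + y5)%N.
Local Notation rk := (blk x0 x1 x2 x3 x4 x5).
Local Notation ck := (blk y0 y1 y2 y3 y4 y5).
Local Notation E := (Emx y0 y1 y2 y3 y4 y5 x0 x1 x2 x3 x4 x5).
Local Notation gx := (gsz x0 x1 x2 x3 x4 x5).
Local Notation gy := (gsz y0 y1 y2 y3 y4 y5).

Lemma lineY_of : E *m (const_mx 1 : 'cV[int]_Y) = 0 ->
  (0 < gx 0)%N -> (0 < gx 1)%N -> lineY y0 y1 y2 y3 y4 y5.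
Proof.
move=> hE h0 h1.
have key : forall i : 'I_X, sum6 (fun c => (ysz y0 y1 y2 y3 y4 y5 c)%:Z * sgn_tab (rk i) c) = 0.
  move=> i; have := congr1 (fun M : 'cV[int]_X => M i ord0) hE; rewrite !mxE.
  rewrite (eq_bigr (fun j : 'I_Y => sgn_tab (rk i) (ck j))); last by move=> j _; rewrite !mxE mulr1.
  by rewrite sum_blk_const.
have [i0 k0] := @rep_ex x0 x1 x2 x3 x4 x5 0%N isT h0.
have [i1 k1] := @rep_ex x0 x1 x2 x3 x4 x5 1%N isT h1.
have e0 := key i0; have e1 := key i1.
have b0 := blk_lt6 x0 x1 x2 x3 x4 x5 i0; have b1 := blk_lt6 x0 x1 x2 x3 x4 x5 i1.
rewrite /lineY.
case: (rk i1) b1 k1 e1 => [|[|[|[|[|[|r1]]]]]] // _ _ e1;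
  case: (rk i0) b0 k0 e0 => [|[|[|[|[|[|r0]]]]]] // _ _ e0;
  move: e0 e1; rewrite /sum6 /=; lia.
Qed.

Lemma lineX_of : (const_mx 1 : 'rV[int]_X) *m E = 0 ->
  (0 < gy 0)%N -> (0 < gy 1)%N -> lineY x0 x1 x2 x3 x4 x5.
Proof.
move=> hE h0 h1.
have key : forall j : 'I_Y, sum6 (fun c => (ysz x0 x1 x2 x3 x4 x5 c)%:Z * sgn_tab c (ck j)) = 0.
  move=> j; have := congr1 (fun M : 'rV[int]_Y => M ord0 j) hE; rewrite !mxE.
  rewrite (eq_bigr (fun i : 'I_X => sgn_tab (rk i) (ck j))); last by move=> i _; rewrite !mxE mul1r.
  by rewrite (sum_blk_const x0 x1 x2 x3 x4 x5 (fun b => sgn_tab b (ck j))).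
have [i0 k0] := @rep_ex y0 y1 y2 y3 y4 y5 0%N isT h0.
have [i1 k1] := @rep_ex y0 y1 y2 y3 y4 y5 1%N isT h1.
have e0 := key i0; have e1 := key i1.
have b0 := blk_lt6 y0 y1 y2 y3 y4 y5 i0; have b1 := blk_lt6 y0 y1 y2 y3 y4 y5 i1.
rewrite /lineY.
case: (ck i1) b1 k1 e1 => [|[|[|[|[|[|r1]]]]]] // _ _ e1;
  case: (ck i0) b0 k0 e0 => [|[|[|[|[|[|r0]]]]]] // _ _ e0;
  move: e0 e1; rewrite /sum6 /=; lia.
Qed.

End Lines.

Lemma red_eq N M N' M' : (0 < N)%N -> (0 < M)%N -> (0 < N')%N -> (0 < M')%N ->
  (N * M' = N' * M)%N ->
  (N %/ gcdn N M = N' %/ gcdn N' M')%N /\ (M %/ gcdn N M = M' %/ gcdn N' M')%N.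
Proof.
move=> hN hM hN' hM' e.
set g := gcdn N M; set g' := gcdn N' M'.
have gp : (0 < g)%N by rewrite gcdn_gt0 hN.
have gp' : (0 < g')%N by rewrite gcdn_gt0 hN'.
have eN : (N * g' = N' * g)%N.
  by rewrite /g /g' !muln_gcdr e [(N * N')%N]mulnC.
have eM : (M * g' = M' * g)%N.
  rewrite /g /g' !muln_gcdr [(M * N')%N]mulnC -e.
  by rewrite [(N * M')%N]mulnC [(M * M')%N]mulnC.
have dN : (g %| N)%N by apply: dvdn_gcdl.
have dM : (g %| M)%N by apply: dvdn_gcdr.
have dN' : (g' %| N')%N by apply: dvdn_gcdl.
have dM' : (g' %| M')%N by apply: dvdn_gcdr.
have gg' : (0 < g * g')%N by rewrite muln_gt0 gp gp'.
split; apply/eqP; rewrite -(eqn_pmul2r gg').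
- by rewrite mulnA divnK // eN [(g * g')%N]mulnC mulnA divnK.
- by rewrite mulnA divnK // eM [(g * g')%N]mulnC mulnA divnK.
Qed.
Lemma blk_arith1 (N G : nat) : odd G -> (G %| N)%N ->
  1 * (2 * (N %/ G * (G.+1)./2)%N%:Z - N%:Z) = (N %/ G)%N%:Z.
Proof.
move=> ho hd; have eN := divnK hd.
move: (N %/ G)%N eN => q eN.
have eG : (G = 2 * G./2 + 1)%N by lia.
have eH : ((G.+1)./2 = G./2 + 1)%N by lia.
move: (G./2) eG eH => h eG eH; rewrite eH -eN eG; lia.
Qed.
Lemma blk_arith2 (N G : nat) : odd G -> (G %| N)%N ->
  -1 * (2 * (N %/ G * G./2)%N%:Z - N%:Z) = (N %/ G)%N%:Z.
Proof.
move=> ho hd; have eN := divnK hd.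
move: (N %/ G)%N eN => q eN.
have eG : (G = 2 * G./2 + 1)%N by lia.
move: (G./2) eG => h eG; rewrite -eN eG; lia.
Qed.

Arguments blk_arith1 {N G}.
Arguments blk_arith2 {N G}.

Lemma hh_le (G g : nat) : odd G -> ((if g == 1%N then G./2 else G.+1./2) <= G)%N.
Proof. move=> h; case: ifP => _; lia. Qed.

Lemma rat_cross (x y z w : nat) : (0 < y)%N -> (0 < w)%N ->
  (x%:R / y%:R = z%:R / w%:R :> rat) <-> (x * w = z * y)%N.
Proof.
move=> hy hw; split.
  move/eqP; rewrite eqr_div ?pnatr_eq0 -?lt0n // -!natrM eqr_nat.
  by move/eqP.
move=> h; apply/eqP; rewrite eqr_div ?pnatr_eq0 -?lt0n // -!natrM eqr_nat h.
done.
Qed.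

Theorem theorem4p35 (a b c d e f k l p q r s : nat) :
  (0 < a + b)%N -> (0 < c + d)%N -> (0 < e + f)%N ->
  (0 < k + l)%N -> (0 < p + q)%N -> (0 < r + s)%N ->
  Emx a b c d e f k l p q r s *m (const_mx 1 : 'cV[int]_(a + b + c + d + e + f)) = 0 ->
  (const_mx 1 : 'rV[int]_(k + l + p + q + r + s)) *m Emx a b c d e f k l p q r s = 0 ->
  (realizable (Emx a b c d e f k l p q r s) <->
   ([&& ~~ odd (a + b), ~~ odd (c + d), ~~ odd (e + f),
        ~~ odd (k + l), ~~ odd (p + q) & ~~ odd (r + s)]
    \/
    (([&& odd (a + b), odd (c + d) & odd (e + f)] \/
      [&& odd (k + l), odd (p + q) & odd (r + s)]) /\
     ((e + f)%:R / (k + l)%:R = (c + d)%:R / (p + q)%:R :> rat) /\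
     ((c + d)%:R / (p + q)%:R = (a + b)%:R / (r + s)%:R :> rat)))).
Proof.
move=> hab hcd hef hkl hpq hrs hE1 hE2.
have hnx : forall g, (g < 3)%N -> (0 < gsz k l p q r s g)%N.
  by case=> [|[|[|g]]] // _; rewrite /gsz /=.
have hny : forall g, (g < 3)%N -> (0 < gsz a b c d e f g)%N.
  by case=> [|[|[|g]]] // _; rewrite /gsz /=.
have hly := @lineY_of k l p q r s a b c d e f hE1 (hnx 0%N isT) (hnx 1%N isT).
have hlx := @lineX_of k l p q r s a b c d e f hE2 (hny 0%N isT) (hny 1%N isT).
have [l1 l2] := hly; have [l3 l4] := hlx.
split.
- move/(@onlyif_gen k l p q r s a b c d e f hlx hly hnx hny) => [A2 [B2 [u [v [hA2 [hB2 hg]]]]]].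
  have h0 := hg 0%N isT; have h1 := hg 1%N isT; have h2 := hg 2%N isT.
  rewrite /gsz /= in h0 h1 h2.
  case: (boolP (odd (a + b) || odd (k + l))) => hodd; last first.
    by left; lia.
  right; split; first by lia.
  have hAB : A2 != 0 /\ B2 != 0.
    case/orP: hodd => ho.
      have hA : A2 != 0 by apply/eqP; lia.
      split => //; apply/eqP => hB; move: h0; rewrite hB mulr0 => /eqP.
      by rewrite mulf_eq0 (negbTE hA) orbF; lia.
    have hB : B2 != 0 by apply/eqP; lia.
    split => //; apply/eqP => hA; move: h0; rewrite hA mulr0 => /esym/eqP.
    by rewrite mulf_eq0 (negbTE hB) orbF; lia.
  have [_ hB] := hAB.
  split; apply/rat_cross => //.
  + have e1 : ((e + f) * (p + q))%N%:Z * B2 = ((c + d) * (k + l))%N%:Z * B2.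
      rewrite !PoszM.
      transitivity ((p + q)%:Z * ((e + f)%:Z * B2)); first ring.
      rewrite -h0.
      transitivity ((k + l)%:Z * ((p + q)%:Z * A2)); first ring.
      by rewrite h1; ring.
    by move/(mulIf hB): e1 => [].
  + have e1 : ((c + d) * (r + s))%N%:Z * B2 = ((a + b) * (p + q))%N%:Z * B2.
      rewrite !PoszM.
      transitivity ((r + s)%:Z * ((c + d)%:Z * B2)); first ring.
      rewrite -h1.
      transitivity ((p + q)%:Z * ((r + s)%:Z * A2)); first ring.
      by rewrite h2; ring.
    by move/(mulIf hB): e1 => [].
- case=> [hev | [hodd [r1 r2]]].
  + move/and4P: hev => [o1 o2 o3 /andP[o4 /andP[o5 o6]]].
    apply: (@if_gen k l p q r s a b c d e f (fun _ => 2%N) (fun _ => 1%N) 0 0) => //;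
      try (by apply: hnx); try (by apply: hny).
    * by case=> [|[|[|g]]] // _; rewrite /gsz /= dvdn2.
    * by case=> [|[|[|g]]] // _; rewrite /gsz /= dvdn2.
    * by case=> [|[|[|g]]] // _; rewrite /gsz /sgr /=; lia.
    * by case=> [|[|[|g]]] // _; rewrite /gsz /sgr /=; lia.
  + move/rat_cross: r1 => /(_ hkl hpq) n1.
    move/rat_cross: r2 => /(_ hpq hrs) n2.
    have [rn1 rm1] := @red_eq (e + f) (k + l) (c + d) (p + q) hef hkl hcd hpq n1.
    have [rn2 rm2] := @red_eq (c + d) (p + q) (a + b) (r + s) hcd hpq hab hrs n2.
    pose gg := fun g => gcdn (gsz a b c d e f (2 - g)) (gsz k l p q r s g).
    pose hh := fun g => if g == 1%N then (gg g)./2 else (gg g).+1./2.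
    have hgo : forall g, (g < 3)%N -> odd (gg g).
      move=> g hg; case: hodd => /and3P [z1 z2 z3].
        apply: (dvdn_odd (dvdn_gcdl _ _)).
        by move: g hg; case=> [|[|[|g]]] // _; rewrite /gsz /=.
      apply: (dvdn_odd (dvdn_gcdr _ _)).
      by move: g hg; case=> [|[|[|g]]] // _; rewrite /gsz /=.
    apply: (@if_gen k l p q r s a b c d e f gg hh
              ((e + f) %/ gcdn (e + f) (k + l))%N%:Z
              ((k + l) %/ gcdn (e + f) (k + l))%N%:Z) => //;
      try (by apply: hnx); try (by apply: hny).
    * move=> g hg; rewrite /gg gcdn_gt0; apply/orP; left.
      by move: g hg; case=> [|[|[|g]]] // _; rewrite /gsz /=.
    * by move=> g hg; rewrite /hh; apply: hh_le; apply: hgo.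
    * by move=> g hg; rewrite /gg; apply: dvdn_gcdr.
    * by move=> g hg; rewrite /gg; apply: dvdn_gcdl.
    * move=> g hg; have ho := hgo g hg; rewrite /hh /sgr.
      case: g hg ho => [|[|[|g]]] // _ ho; rewrite /gg /gsz /= in ho *.
      - by rewrite -(blk_arith1 ho (dvdn_gcdl _ _)).
      - by rewrite rn1 -(blk_arith2 ho (dvdn_gcdl _ _)).
      - by rewrite rn1 rn2 -(blk_arith1 ho (dvdn_gcdl _ _)).
    * move=> g hg; have ho := hgo g hg; rewrite /hh /sgr.
      case: g hg ho => [|[|[|g]]] // _ ho; rewrite /gg /gsz /= in ho *.
      - by rewrite -(blk_arith1 ho (dvdn_gcdr _ _)).
      - by rewrite rm1 -(blk_arith2 ho (dvdn_gcdr _ _)).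
      - by rewrite rm1 rm2 -(blk_arith1 ho (dvdn_gcdr _ _)).
Qed.
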